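(* Let $(A,m)$ be a curved $A_\infty$-algebra over a field $\mathbf{F}$ and $m=\sum_{k\ge0}m_k\in\prod_kC^{k,2-k}(A,A)$. Then $m=[m,\mathbf{I}-\mathbf{E}]$; in particular $[m]=0\in\mathrm{HH}^2(A,A)$.
   Context: A curved $A_\infty$-algebra $(A,m)$ over $\mathbf{F}$ is a $\mathbf{Z}$-graded vector space $A=\bigoplus_kA^k$ with graded linear maps $m_n:A^{\otimes n}\to A$ for $n\ge0$ (with $m_0$ identified with $m_0(\mathbf{1})\in A^2$) of degree $2-n$, with $m_k=0$ for $k\gg1$, satisfying for every $n\ge0$: $\sum_{n=r+s+t}(-1)^{\delta(x_1,\dots,x_r)}m_{r+1+t}(x_1,\dots,x_r,m_s(x_{r+1},\dots,x_{r+s}),x_{r+s+1},\dots,x_n)=0$ ($r,t,s\ge0$), where $\delta(x_1,\dots,x_r)=\sum_{i=1}^r(|x_i|-1)$. Let $C^{n,k}(A,A)=\mathrm{Hom}^k(A^{\otimes n},A)=\prod_i\mathrm{Hom}((A^{\otimes n})^i,A^{i+k})$ for $n\ge0$ (with $A^{\otimes0}=\mathbf{F}$, so $C^{0,k}\cong A^k$). For $f\in C^{n,k}$, $g\in C^{m,l}$ the Gerstenhaber bracket is $[f,g]=\sum_{i=0}^{n-1}(-1)^{\delta_1}f(\mathbf{I}^{\otimes i}\otimes g\otimes\mathbf{I}^{\otimes n-i-1})-(-1)^{(n+k-1)(m+l-1)}\sum_{i=0}^{m-1}(-1)^{\delta_2}g(\mathbf{I}^{\otimes i}\otimes f\otimes\mathbf{I}^{\otimes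 m-i-1})$, with $\delta_1=(n-1)(m-1)+(n-1)l+i(m-1)$, $\delta_2=(m-1)(n-1)+(m-1)k+i(n-1)$, empty sums $=0$, tensor products of maps evaluated with the Koszul sign rule, extended bilinearly. $D=[m,-]$ and $\mathrm{HH}^*(A,A)=H^*(\prod_iC^{i,*-i}(A,A),D)$. $\mathbf{I}\in C^{1,0}$ is the identity, and the euler derivation element $\mathbf{E}\in C^{1,0}$ is $\mathbf{E}(\alpha)=\deg(\alpha)\,\alpha$ for homogeneous $\alpha$. *)

(* Defs.v *)
From HB Require Import structures.
From mathcomp Require Import all_boot all_order all_algebra.
Set Implicit Arguments. Unset Strict Implicit. Unset Printing Implicit Defensive.
Import Order.TTheory GRing.Theory Num.Theory.
Local Open Scope ring_scope.

(* A Z-graded F-vector space A = (+)_k A^k, presented by the family of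
   projections gcomp k : A -> A^k of the direct sum decomposition: they are
   linear, mutually orthogonal idempotents, and every x is the (finite) sum of
   its homogeneous components, indexed by the duplicate-free list gsupp x. *)
Record graded (F : fieldType) (A : lmodType F) := Graded {
  gcomp : int -> A -> A;
  gcomp_linear : forall d, linear (gcomp d);
  gcomp_orth : forall d e x, gcomp d (gcomp e x) = if d == e then gcomp e x else 0;
  gsupp : A -> seq int;
  gsupp_uniq : forall x, uniq (gsupp x);
  gsupp_sum : forall x, x = \sum_(d <- gsupp x) gcomp d x }.

Section Hochschild.
Variables (F : fieldType) (A : lmodType F) (G : graded A).

Definition homog (d : int) (x : A) : Prop := gcomp G d x = x.

Definition sgn (z : int) : F := (-1) ^+ `|z|%N.

Definition ktwist (l : int) (x : A) : A :=
  \sum_(d <- gsupp G x) sgn (l * d) *: gcomp G d x.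

Definition euler (x : A) : A := \sum_(d <- gsupp G x) d%:~R *: gcomp G d x.

(* An n-ary cochain is a function on lists of n inputs (values on lists of
   other lengths are irrelevant). *)
Definition cochain := seq A -> A.

(* f \in C^{n,k}(A,A) = Hom^k(A^{(x) n}, A): n-multilinear, of degree k. *)
Definition is_cochain (n : nat) (k : int) (f : cochain) : Prop :=
  (forall (xs : seq A) (i : nat) (a : F) (y z : A), size xs = n -> (i < n)%N ->
      f (set_nth 0 xs i (a *: y + z))
      = a *: f (set_nth 0 xs i y) + f (set_nth 0 xs i z)) /\
  (forall (xs : seq A) (ds : seq int), size xs = n -> size ds = n ->
      (forall j, (j < n)%N -> homog (nth 0 ds j) (nth 0 xs j)) ->
      homog (\sum_(d <- ds) d + k) (f xs)).

(* f (I^{(x) i} (x) g (x) I^{(x) ...}) evaluated with the Koszul sign rule,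
   where g has arity m and degree l: the sign (-1)^(l(|x_1|+...+|x_i|)) is
   realised by twisting the first i inputs. *)
Definition ins (f : cochain) (i m : nat) (l : int) (g : cochain) : cochain :=
  fun xs => f (map (ktwist l) (take i xs) ++ g (take m (drop i xs)) :: drop (i + m) xs).

Definition gbracket (n : nat) (k : int) (f : cochain) (m : nat) (l : int)
    (g : cochain) : cochain :=
  fun xs =>
    \sum_(i < n) sgn ((n%:Z - 1) * (m%:Z - 1) + (n%:Z - 1) * l + (i%:Z) * (m%:Z - 1))
                   *: ins f i m l g xs
    - sgn ((n%:Z + k - 1) * (m%:Z + l - 1)) *:
      \sum_(i < m) sgn ((m%:Z - 1) * (n%:Z - 1) + (m%:Z - 1) * k + (i%:Z) * (n%:Z - 1))
                   *: ins g i n k f xs.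

(* Bilinear extension of the bracket to elements of prod_i C^{i,*-i} of total
   degrees p and q (the arity-n component of Fm lies in C^{n,p-n}).  The arity-r
   component of the bracket collects the brackets of components of arities
   n, m with n + m - 1 = r. *)
Definition tbracket (p q : int) (Fm Gm : nat -> cochain) : nat -> cochain :=
  fun r xs => \sum_(j < r.+2)
    gbracket j (p - j%:Z) (Fm j) (r.+1 - j) (q - (r.+1 - j)%N%:Z) (Gm (r.+1 - j)%N) xs.

Definition I_minus_E : nat -> cochain :=
  fun n xs => if n == 1%N then nth 0 xs 0 - euler (nth 0 xs 0) else 0.

Definition curved_Ainf (m : nat -> cochain) : Prop :=
  (forall n, is_cochain n (2 - n%:Z) (m n)) /\
  (exists N : nat, forall n xs, (N < n)%N -> size xs = n -> m n xs = 0) /\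
  (forall (n : nat) (xs : seq A) (ds : seq int), size xs = n -> size ds = n ->
     (forall j, (j < n)%N -> homog (nth 0 ds j) (nth 0 xs j)) ->
     \sum_(r < n.+1) \sum_(s < (n - r).+1)
        sgn (\sum_(d <- take r ds) (d - 1)) *:
          m (r + 1 + (n - r - s))%N
            (take r xs ++ m s (take s (drop r xs)) :: drop (r + s) xs) = 0).

End Hochschild.

(* Main.v *)
Require Import Defs.
From HB Require Import structures.
From mathcomp Require Import all_boot all_order all_algebra.
From mathcomp Require Import ring zify.
Import Order.TTheory GRing.Theory Num.Theory.
Local Open Scope ring_scope.
Set Implicit Arguments. Unset Strict Implicit.

Section Helpers.
Variables (F : fieldType) (A : lmodType F) (G : graded A).

Lemma gcompL d a u v : gcomp G d (a *: u + v) = a *: gcomp G d u + gcomp G d v.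
Proof. exact: (gcomp_linear G d a u v). Qed.

Lemma gcomp0 d : gcomp G d 0 = 0.
Proof.
have := gcompL d 1 0 0; rewrite !scale1r addr0 => h.
by apply: (@addrI _ (gcomp G d 0)); rewrite addr0 -h.
Qed.

Lemma gcomp_sum d (I : Type) (s : seq I) (v : I -> A) :
  gcomp G d (\sum_(i <- s) v i) = \sum_(i <- s) gcomp G d (v i).
Proof.
elim: s => [|x s IH]; first by rewrite !big_nil gcomp0.
rewrite !big_cons; have := gcompL d 1 (v x) (\sum_(i <- s) v i).
by rewrite !scale1r => ->; rewrite IH.
Qed.

Lemma sum_if_eq (S : seq int) e (Fn : int -> A) : uniq S -> e \in S ->
  \sum_(x <- S) (if x == e then Fn x else 0) = Fn e.
Proof.
elim: S => [|x S IH] //= /andP [xS uS]; rewrite in_cons big_cons.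
case: eqVneq => [-> _|nxe /= eS]; last by rewrite IH // add0r.
rewrite big1_seq ?addr0 // => y /= yS; case: eqVneq => // ye.
by rewrite -ye yS in xS.
Qed.

Lemma euler_any S x : uniq S -> {subset gsupp G x <= S} ->
  euler G x = \sum_(d <- S) d%:~R *: gcomp G d x.
Proof.
move=> uS sub.
have gx d : gcomp G d x = \sum_(e <- gsupp G x) (if d == e then gcomp G e x else 0).
  by rewrite {1}(gsupp_sum G x) gcomp_sum; apply: eq_bigr => e _; rewrite gcomp_orth.
rewrite (eq_bigr (fun d => \sum_(e <- gsupp G x)
   (if d == e then d%:~R *: gcomp G e x else 0))); last first.
  by move=> d _; rewrite gx scaler_sumr; apply: eq_bigr => e _; case: eqP => //; rewrite scaler0.
rewrite exchange_big /euler big_seq [RHS]big_seq; apply: eq_bigr => e eS.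
rewrite (@sum_if_eq _ _ (fun d => d%:~R *: gcomp G e x)) //; exact: sub.
Qed.

Lemma nmodL_sub (V : zmodType) (p q r s t u : V) :
  (p + q) - (r + s) + (t + u) = (p - r + t) + (q - s + u).
Proof. rewrite opprD [(p + q) + _]addrACA; exact: addrACA. Qed.

Lemma eulerL a u v : euler G (a *: u + v) = a *: euler G u + euler G v.
Proof.
set S := undup (gsupp G u ++ gsupp G v ++ gsupp G (a *: u + v)).
have uS : uniq S by apply: undup_uniq.
have sub w : {subset gsupp G w <= gsupp G u ++ gsupp G v ++ gsupp G (a *: u + v)} ->
   euler G w = \sum_(d <- S) d%:~R *: gcomp G d w.
  by move=> h; apply: euler_any => // y yin; rewrite mem_undup h.
rewrite !sub; try by move=> y yin; rewrite !mem_cat yin ?orbT.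
rewrite scaler_sumr -big_split; apply: eq_bigr => d _.
by rewrite gcompL scalerDr !scalerA mulrC.
Qed.

Lemma euler_homog d y : homog G d y -> euler G y = d%:~R *: y.
Proof.
rewrite /homog => hy.
set S := undup (d :: gsupp G y).
rewrite (@euler_any S) ?undup_uniq //; last first.
  by move=> e ein; rewrite mem_undup in_cons ein orbT.
rewrite (eq_bigr (fun e => if e == d then e%:~R *: y else 0)).
  by rewrite (@sum_if_eq _ _ (fun e => e%:~R *: y)) // ?undup_uniq // mem_undup mem_head.
by move=> e _; rewrite -{1}hy gcomp_orth hy; case: eqP => //; rewrite scaler0.
Qed.

Definition slotlin (f : seq A -> A) (n : nat) := forall (xs : seq A) (i : nat) (a : F) (y z : A), size xs = n -> (i < n)%N ->
      f (set_nth 0 xs i (a *: y + z))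
      = a *: f (set_nth 0 xs i y) + f (set_nth 0 xs i z).

Lemma set_nth_id (s : seq A) i : (i < size s)%N -> set_nth 0 s i (nth 0 s i) = s.
Proof.
move=> lt; apply: (@eq_from_nth _ 0) => [|j _]; first by rewrite size_set_nth (maxn_idPr lt).
by rewrite nth_set_nth /=; case: eqP => // ->.
Qed.

Lemma slot0 f n xs i : slotlin f n -> size xs = n -> (i < n)%N ->
  f (set_nth 0 xs i 0) = 0.
Proof.
move=> hf sx lt; have := hf xs i 1 0 0 sx lt; rewrite !scale1r addr0 => h.
by apply: (@addrI _ (f (set_nth 0 xs i 0))); rewrite addr0 -h.
Qed.

Lemma slotZ f n xs i a y : slotlin f n -> size xs = n -> (i < n)%N ->
  f (set_nth 0 xs i (a *: y)) = a *: f (set_nth 0 xs i y).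
Proof.
move=> hf sx lt; have := hf xs i a y 0 sx lt.
by rewrite addr0 (@slot0 _ _ _ _ hf sx lt) addr0.
Qed.

Lemma slot_sum f n xs i (I : Type) (s : seq I) (v : I -> A) :
  slotlin f n -> size xs = n -> (i < n)%N ->
  f (set_nth 0 xs i (\sum_(e <- s) v e)) = \sum_(e <- s) f (set_nth 0 xs i (v e)).
Proof.
move=> hf sx lt; elim: s => [|x s IH]; first by rewrite !big_nil (@slot0 _ _ _ _ hf sx lt).
rewrite !big_cons; have := hf xs i 1 (v x) (\sum_(e <- s) v e) sx lt.
by rewrite !scale1r => ->; rewrite IH.
Qed.

Lemma zero_slot f n l i : slotlin f n -> size l = n -> (i < n)%N ->
  nth 0 l i = 0 -> f l = 0.
Proof.
move=> hf sl lt h0; rewrite -(@set_nth_id l i) ?sl // h0; exact: (@slot0 _ _ _ _ hf sl lt).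
Qed.

End Helpers.
Section Main.
Variables (F : fieldType) (A : lmodType F) (G : graded A) (m : nat -> cochain A).
Hypothesis hm : forall n, is_cochain G n (2 - n%:Z) (m n).

Lemma lin n : slotlin (m n) n.
Proof. exact: (hm n).1. Qed.

Definition Phi r xs := (r%:R - 2) *: m r xs
  - \sum_(i < r) m r (set_nth 0 xs i (euler G (nth 0 xs i))) + euler G (m r xs).

Lemma Phi_lin r : slotlin (Phi r) r.
Proof.
move=> xs k a y z sx lt.
have ss w : size (set_nth 0 xs k w) = r by rewrite size_set_nth sx (maxn_idPr lt).
have ssi (i : 'I_r) w : size (set_nth 0 xs i w) = r.
  by rewrite size_set_nth sx (maxn_idPr (ltn_ord i)).
have hsum w : \sum_(i < r) m r (set_nth 0 (set_nth 0 xs k w) i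
      (euler G (nth 0 (set_nth 0 xs k w) i)))
  = \sum_(i < r) (if (i : nat) == k then m r (set_nth 0 xs k (euler G w))
       else m r (set_nth 0 (set_nth 0 xs i (euler G (nth 0 xs i))) k w)).
  apply: eq_bigr => i _; rewrite nth_set_nth /= set_set_nth.
  case: eqP => [->|ne]; first by rewrite eqxx.
  by case: eqP => // ki; case: ne.
rewrite /Phi !hsum (@lin r xs k a y z sx lt).
have -> : \sum_(i < r) (if (i : nat) == k then m r (set_nth 0 xs k (euler G (a *: y + z)))
       else m r (set_nth 0 (set_nth 0 xs i (euler G (nth 0 xs i))) k (a *: y + z)))
  = a *: \sum_(i < r) (if (i : nat) == k then m r (set_nth 0 xs k (euler G y))
       else m r (set_nth 0 (set_nth 0 xs i (euler G (nth 0 xs i))) k y))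
  + \sum_(i < r) (if (i : nat) == k then m r (set_nth 0 xs k (euler G z))
       else m r (set_nth 0 (set_nth 0 xs i (euler G (nth 0 xs i))) k z)).
  rewrite scaler_sumr -big_split; apply: eq_bigr => i _.
  case: eqP => _; first by rewrite eulerL (@lin r xs k a _ _ sx lt).
  by rewrite (@lin r _ k a y z (ssi i _) lt).
rewrite eulerL !scalerDr !scalerN !scalerA [a * _]mulrC.
exact: nmodL_sub.
Qed.
End Main.
Section Main2.
Variables (F : fieldType) (A : lmodType F) (G : graded A) (m : nat -> cochain A).
Hypothesis hm : forall n, is_cochain G n (2 - n%:Z) (m n).

Lemma Phi_homog r xs ds : size xs = r -> size ds = r ->
  (forall j, (j < r)%N -> homog G (nth 0 ds j) (nth 0 xs j)) -> Phi G m r xs = 0.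
Proof.
move=> sx sd h.
have e1 (i : 'I_r) : m r (set_nth 0 xs i (euler G (nth 0 xs i)))
    = (nth 0 ds i)%:~R *: m r xs.
  by rewrite (euler_homog (h i (ltn_ord i))) (slotZ _ _ (@lin _ _ _ _ hm r) sx (ltn_ord i)) set_nth_id ?sx.
have e2 : euler G (m r xs) = (\sum_(d <- ds) d + (2 - r%:Z))%:~R *: m r xs.
  by apply: euler_homog; exact: (hm r).2 xs ds sx sd h.
rewrite /Phi (eq_bigr _ (fun i _ => e1 i)) e2 -scaler_suml -scalerBl -scalerDl.
have -> : \sum_(i < r) (nth 0 ds i)%:~R = (\sum_(d <- ds) d)%:~R :> F.
  rewrite (big_morph (fun z : int => z%:~R : F) (@intrD F) (mulr0z 1)).
  by rewrite (big_nth 0) sd big_mkord.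
have -> : r%:R - 2 - (\sum_(d <- ds) d)%:~R + (\sum_(d <- ds) d + (2 - r%:Z))%:~R = 0 :> F.
  rewrite intrD intrB; ring.
by rewrite scale0r.
Qed.
End Main2.
Section Main3.
Variables (F : fieldType) (A : lmodType F) (G : graded A) (m : nat -> cochain A).
Hypothesis hm : forall n, is_cochain G n (2 - n%:Z) (m n).

Lemma Phi_zero r xs : size xs = r -> Phi G m r xs = 0.
Proof.
move=> sx.
suff P k : (k <= r)%N -> forall ys ds, size ys = r -> size ds = r ->
  (forall j, (k <= j < r)%N -> homog G (nth 0 ds j) (nth 0 ys j)) -> Phi G m r ys = 0.
  apply: (P r (leqnn r) xs (nseq r 0)) => //; first by rewrite size_nseq.
  by move=> j /andP [h1 h2]; rewrite leqNgt h2 in h1.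
elim: k => [_|k IH kr] ys ds sy sd h.
  by apply: (Phi_homog hm sy sd) => j jr; apply: h.
have -> : ys = set_nth 0 ys k (\sum_(d <- gsupp G (nth 0 ys k)) gcomp G d (nth 0 ys k)).
  by rewrite -gsupp_sum set_nth_id ?sy.
rewrite (slot_sum _ _ (@Phi_lin _ _ _ _ hm r) sy kr); apply: big1 => d _.
have sz (T : Type) (s : seq T) x0 w : size s = r -> size (set_nth x0 s k w) = r.
  by move=> hs; rewrite size_set_nth hs (maxn_idPr kr).
apply: (IH (ltnW kr) _ (set_nth 0 ds k d)); rewrite ?sz //.
move=> j /andP [kj jr]; rewrite !nth_set_nth /=; have [_|ne] := eqVneq j k.
  by rewrite /homog gcomp_orth eqxx.
by apply: h; rewrite jr andbT; move/eqP: ne => ne; lia.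
Qed.

Lemma gb_zero r xs j : size xs = r -> (j <= r.+1)%N -> (j != r) ->
  gbracket G j (2 - j%:Z) (m j) (r.+1 - j) (1 - (r.+1 - j)%N%:Z)
     (I_minus_E G (r.+1 - j)) xs = 0.
Proof.
move=> sx jr jnr.
have k1 : (r.+1 - j == 1)%N = false by apply/eqP; move/eqP: jnr; lia.
rewrite /gbracket [X in _ - _ *: X]big1 ?scaler0 ?subr0; last first.
  by move=> i _; rewrite /ins /I_minus_E k1 scaler0.
apply: big1 => i _; rewrite /ins /I_minus_E k1.
have ij := ltn_ord i.
rewrite (zero_slot (@lin _ _ _ _ hm j) _ ij) ?scaler0 //.
  rewrite size_cat size_map size_takel /= ?size_drop sx; lia.
by rewrite nth_cat size_map size_takel ?sx ?ltnn ?subnn //; lia.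
Qed.
End Main3.
Lemma sgn_eq1 (F : fieldType) (z : int) : z = 0 -> sgn F z = 1.
Proof. by move=> ->; rewrite /sgn expr0. Qed.

Lemma ktwist_0 (F : fieldType) (A : lmodType F) (G : graded A) l x :
  l = 0 -> ktwist G l x = x.
Proof.
move=> ->; rewrite /ktwist [RHS](gsupp_sum G x); apply: eq_bigr => d _.
by rewrite mul0r sgn_eq1 ?scale1r.
Qed.

Lemma final_alg (F : fieldType) (A : lmodType F) (M S E : A) (r : nat) :
  (r%:R - 2) *: M - S + E = 0 -> M = M *+ r - S - (M - E).
Proof.
move=> h; apply/eqP; rewrite -subr_eq0 -oppr_eq0; apply/eqP; rewrite -[RHS]h.
rewrite scalerBl scaler_nat (_ : 2 = 1 + 1) // scalerDl scale1r.
rewrite !opprB opprD !addrA [M *+ r - M - M - S]addrAC [M *+ r - M - S]addrAC.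
by rewrite [M *+ r - S + E - M]addrAC [M *+ r - S - M + E - M]addrAC.
Qed.

Theorem theorem3p4 (F : fieldType) (A : lmodType F) (G : graded A)
    (m : nat -> cochain A) :
  curved_Ainf G m ->
  forall (r : nat) (xs : seq A), size xs = r ->
    m r xs = tbracket G 2 1 m (I_minus_E G) r xs.
Proof.
move=> [hm _] r xs sx.
have hP := Phi_zero hm sx; rewrite /Phi in hP.
rewrite /tbracket (bigD1 (@Ordinal r.+2 r (leqW (ltnSn r)))) //=.
rewrite big1 ?addr0; last first.
  move=> j hj; apply: (gb_zero hm sx); first by rewrite -ltnS ltn_ord.
  by apply: contra hj => /eqP hj; apply/eqP; apply: val_inj.
rewrite subSnn /gbracket big_ord1.
rewrite !sgn_eq1 ?scale1r; try by rewrite /=; lia.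
have msub (i : 'I_r) w : m r (set_nth 0 xs i (nth 0 xs i - w)) = m r xs - m r (set_nth 0 xs i w).
  have h := @lin _ _ _ _ hm r xs i (-1) w (nth 0 xs i) sx (ltn_ord i).
  rewrite !scaleN1r set_nth_id ?sx // in h.
  by rewrite [nth 0 xs i - w]addrC h addrC.
have hi (i : 'I_r) : sgn F ((r%:Z - 1) * (1%:Z - 1) + (r%:Z - 1) * (1 - 1%:Z) + i%:Z * (1%:Z - 1)) *: ins G (m r) i 1 (1 - 1%:Z) (I_minus_E G 1) xs
    = m r xs - m r (set_nth 0 xs i (euler G (nth 0 xs i))).
  rewrite sgn_eq1 ?scale1r; last by lia.
  rewrite /ins (@eq_map _ _ _ id); last by move=> x; apply: ktwist_0; lia.
  rewrite map_id /I_minus_E /= nth_take // nth_drop addn0 addn1.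
  have -> : forall w, take i xs ++ w :: drop i.+1 xs = set_nth 0 xs i w.
    by move=> w; rewrite set_nthE sx ltn_ord.
  exact: msub.
rewrite (eq_bigr _ (fun i _ => hi i)).
have tk : take r xs = xs by rewrite -sx take_size.
have dr : drop r xs = [::] by rewrite -sx drop_size.
rewrite /ins /I_minus_E /= take0 drop0 add0n tk dr /=.
rewrite sumrB sumr_const card_ord; exact: final_alg.
Qed.
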